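(* There exist a scalar product space $(\mathcal{V},g)$, skew-adjoint endomorphisms $J_1,\dots,J_m$ of $\mathcal{V}$ satisfying $J_iJ_j+J_jJ_i=2c_i\delta_{ij}\,\mathrm{id}$ ($1\le i,j\le m$) for some real $c_i$, and real numbers $\mu_0,\dots,\mu_m$, such that the (quasi-Clifford, hence Osserman) algebraic curvature tensor $R=\mu_0R^0+\sum_{i=1}^m\mu_iR^{J_i}$ is not Jacobi-dual.
   Context: A scalar product space is a finite-dimensional real vector space with a nondegenerate symmetric bilinear form $g$ (possibly indefinite); $\varepsilon_X=g(X,X)$, $X$ nonnull if $\varepsilon_X\ne0$. $R^0(X,Y,Z,W)=g(Y,Z)g(X,W)-g(X,Z)g(Y,W)$; for skew-adjoint $J$, $R^J(X,Y,Z,W)=g(JX,Z)g(JY,W)-g(JY,Z)g(JX,W)+2g(JX,Y)g(JZ,W)$. The Jacobi operator is $\mathcal{J}_X(Y)=\sum_{i}\varepsilon_{E_i}R(Y,X,X,E_i)E_i$ for an orthonormal basis $(E_i)$. An eigenvector of $\mathcal{J}_X$ is a nonzero $Y$ with $\mathcal{J}_X(Y)=\lambda Y$, $\lambda\in\mathbb{R}$. $R$ is Osserman if the characteristic polynomial of $\mathcal{J}_X$ is independent of unit timelike $X$ and of unit spacelike $X$. $R$ is Jacobi-dual if for all $X,Y$ with $X$ nonnull, $Y$ an eigenvector of $\mathcal{J}_X$ implies $X$ is an eigenvector of $\mathcal{J}_Y$. *)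

(* Defs.v *)
From mathcomp Require Import all_boot all_order all_algebra.
From mathcomp Require Import reals.
Set Implicit Arguments. Unset Strict Implicit. Unset Printing Implicit Defensive.
Import Order.TTheory GRing.Theory Num.Theory.
Local Open Scope ring_scope.

(* Scalar product space model: V = 'rV[R]_n, with the (possibly indefinite)
   form g_eps(x,y) = sum_i eps_i x_i y_i, eps_i in {1,-1}.  Every finite
   dimensional real scalar product space is isometric to one of these, and the
   standard basis (delta_mx 0 i) is an orthonormal basis with
   g(E_i,E_i) = eps_i. *)

Definition sign_vec (R : realType) (n : nat) (eps : 'I_n -> R) : Prop :=
  forall i, eps i = 1 \/ eps i = -1.

Definition gform (R : realType) (n : nat) (eps : 'I_n -> R)
  (x y : 'rV[R]_n) : R := \sum_(i < n) eps i * x 0 i * y 0 i.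

(* endomorphisms act on row vectors on the right: J x := x *m J *)
Definition skew_adjoint (R : realType) (n : nat) (eps : 'I_n -> R)
  (J : 'M[R]_n) : Prop :=
  forall x y : 'rV[R]_n, gform eps (x *m J) y = - gform eps x (y *m J).

Definition R0 (R : realType) (n : nat) (eps : 'I_n -> R)
  (X Y Z W : 'rV[R]_n) : R :=
  gform eps Y Z * gform eps X W - gform eps X Z * gform eps Y W.

Definition RJ (R : realType) (n : nat) (eps : 'I_n -> R) (J : 'M[R]_n)
  (X Y Z W : 'rV[R]_n) : R :=
  gform eps (X *m J) Z * gform eps (Y *m J) W
  - gform eps (Y *m J) Z * gform eps (X *m J) W
  + 2 * gform eps (X *m J) Y * gform eps (Z *m J) W.

Definition quasiClifford_curv (R : realType) (n m : nat) (eps : 'I_n -> R)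
  (mu0 : R) (mu : 'I_m -> R) (J : 'I_m -> 'M[R]_n)
  (X Y Z W : 'rV[R]_n) : R :=
  mu0 * R0 eps X Y Z W + \sum_(i < m) mu i * RJ eps (J i) X Y Z W.

Definition jacobi_op (R : realType) (n : nat) (eps : 'I_n -> R)
  (Rc : 'rV[R]_n -> 'rV[R]_n -> 'rV[R]_n -> 'rV[R]_n -> R)
  (X Y : 'rV[R]_n) : 'rV[R]_n :=
  \sum_(i < n) (gform eps (delta_mx 0 i) (delta_mx 0 i)
                 * Rc Y X X (delta_mx 0 i)) *: delta_mx 0 i.

Definition is_eigenvector (R : realType) (n : nat)
  (A : 'rV[R]_n -> 'rV[R]_n) (Y : 'rV[R]_n) : Prop :=
  Y != 0 /\ exists lam : R, A Y = lam *: Y.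

Definition jacobi_dual (R : realType) (n : nat) (eps : 'I_n -> R)
  (Rc : 'rV[R]_n -> 'rV[R]_n -> 'rV[R]_n -> 'rV[R]_n -> R) : Prop :=
  forall X Y : 'rV[R]_n, gform eps X X != 0 ->
    is_eigenvector (jacobi_op eps Rc X) Y ->
    is_eigenvector (jacobi_op eps Rc Y) X.

(* Main.v *)
Require Import Defs.
From mathcomp Require Import all_boot all_order all_algebra.
From mathcomp Require Import reals.
From mathcomp Require Import ring lra.
Import GRing.Theory Num.Theory.
Local Open Scope ring_scope.

Section Aux.
Variables (R : realType) (n : nat) (eps : 'I_n -> R).
Local Notation g := (gform eps).

Lemma gsym x y : g x y = g y x.
Proof. by apply: eq_bigr => i _; rewrite mulrAC. Qed.

Lemma gDl x y z : g (x + y) z = g x z + g y z.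
Proof. by rewrite /gform -big_split; apply: eq_bigr => i _; rewrite !mxE /= mulrDr mulrDl. Qed.

Lemma gBl x y z : g (x - y) z = g x z - g y z.
Proof. rewrite /gform -sumrB; apply: eq_bigr => i _; rewrite !mxE; ring. Qed.

Lemma gZl a x z : g (a *: x) z = a * g x z.
Proof. by rewrite /gform mulr_sumr; apply: eq_bigr => i _; rewrite !mxE; ring. Qed.

Lemma gDr x y z : g z (x + y) = g z x + g z y.
Proof. by rewrite gsym gDl !(gsym z). Qed.
Lemma gBr x y z : g z (x - y) = g z x - g z y.
Proof. by rewrite gsym gBl !(gsym z). Qed.
Lemma gZr a x z : g z (a *: x) = a * g z x.
Proof. by rewrite gsym gZl gsym. Qed.

Lemma gNl x z : g (- x) z = - g x z.
Proof. by rewrite -scaleN1r gZl mulN1r. Qed.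
Lemma gNr x z : g z (- x) = - g z x.
Proof. by rewrite -scaleN1r gZr mulN1r. Qed.

Definition Jab (a b : 'rV[R]_n) : 'M[R]_n :=
  (\col_i (eps i * a 0 i)) *m b - (\col_i (eps i * b 0 i)) *m a.

Lemma colact (x a : 'rV[R]_n) : x *m (\col_i (eps i * a 0 i)) = (g x a)%:M.
Proof.
rewrite [LHS]mx11_scalar; congr (_%:M); rewrite !mxE /gform.
by apply: eq_bigr => i _; rewrite !mxE; ring.
Qed.

Lemma Jab_act x a b : x *m Jab a b = g x a *: b - g x b *: a.
Proof. by rewrite /Jab mulmxBr !mulmxA !colact !mul_scalar_mx. Qed.

Lemma Jab_skew a b : skew_adjoint eps (Jab a b).
Proof.
move=> x y; rewrite !Jab_act gBl gBr !gZl !gZr.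
rewrite (gsym b y) (gsym a y) (gsym x b) (gsym x a); ring.
Qed.

Lemma skewD A B : skew_adjoint eps A -> skew_adjoint eps B -> skew_adjoint eps (A + B).
Proof. by move=> hA hB x y; rewrite !mulmxDr gDl gDr hA hB opprD. Qed.

Lemma JabM a b c d : g b c = 0 -> g b d = 0 -> g a c = 0 -> g a d = 0 ->
  Jab a b *m Jab c d = 0.
Proof.
move=> h1 h2 h3 h4; apply/row_matrixP => i; rewrite row_mul row0 rowE.
by rewrite !Jab_act !gBl !gZl h1 h2 h3 h4 !mulr0 subrr !scale0r subrr.
Qed.

Lemma g_delta j : g (delta_mx 0 j) (delta_mx 0 j) = eps j.
Proof.
rewrite /gform (bigD1 j) //= big1 ?addr0.
  by rewrite !mxE !eqxx /= !mulr1n !mulr1.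
by move=> k hk; rewrite !mxE (negbTE hk) /= !mulr0n !mulr0.
Qed.

Lemma jac_entry Rc X Y j :
  (jacobi_op eps Rc X Y) 0 j = eps j * Rc Y X X (delta_mx 0 j).
Proof.
rewrite /jacobi_op summxE (bigD1 j) //= big1 ?addr0.
  by rewrite !mxE !eqxx /= mulr1n mulr1 g_delta.
by move=> k hk; rewrite !mxE eq_sym (negbTE hk) /= mulr0n mulr0.
Qed.

Lemma g_self_skew A x : skew_adjoint eps A -> g (x *m A) x = 0.
Proof.
move=> h; have := h x x; rewrite (gsym x) => e.
have : 2 * g (x *m A) x = 0 by rewrite mulr2n mulrDl mul1r {2}e subrr.
by move/eqP; rewrite mulf_eq0 pnatr_eq0 /= => /eqP.
Qed.
End Aux.

Section T.
Variable R : realType.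
Definition eps6 (i : 'I_6) : R := if (i < 3)%N then 1 else -1.
Definition dd (k : nat) : 'rV[R]_6 := delta_mx 0 (inord k).
Definition e1 := dd 0 + dd 3.
Definition e2 := dd 1 + dd 4.
Definition e3 := dd 2 + dd 5.
Definition Xv := dd 2.
Definition Yv := dd 0 - dd 3.

Lemma eqvalE (i j : 'I_6) : (i == j) = (val i == val j). Proof. by []. Qed.
Ltac gcomp := rewrite /gform /eps6 /e1 /e2 /e3 /Xv /Yv /dd !big_ord_recl big_ord0 !mxE /= !eqvalE /= ?inordK //=.


Lemma g11 : gform eps6 e1 e1 = 0. Proof. gcomp; lra. Qed.
Lemma g12 : gform eps6 e1 e2 = 0. Proof. gcomp; lra. Qed.
Lemma g13 : gform eps6 e1 e3 = 0. Proof. gcomp; lra. Qed.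
Lemma g21 : gform eps6 e2 e1 = 0. Proof. gcomp; lra. Qed.
Lemma g22 : gform eps6 e2 e2 = 0. Proof. gcomp; lra. Qed.
Lemma g23 : gform eps6 e2 e3 = 0. Proof. gcomp; lra. Qed.
Lemma g31 : gform eps6 e3 e1 = 0. Proof. gcomp; lra. Qed.
Lemma g32 : gform eps6 e3 e2 = 0. Proof. gcomp; lra. Qed.
Lemma g33 : gform eps6 e3 e3 = 0. Proof. gcomp; lra. Qed.
Lemma gX1 : gform eps6 Xv e1 = 0. Proof. gcomp; lra. Qed.
Lemma gX2 : gform eps6 Xv e2 = 0. Proof. gcomp; lra. Qed.


Lemma gd_0_0 : gform eps6 (dd 0) (dd 0) = 1. Proof. gcomp; lra. Qed.
Lemma gd_0_1 : gform eps6 (dd 0) (dd 1) = 0. Proof. gcomp; lra. Qed.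
Lemma gd_0_2 : gform eps6 (dd 0) (dd 2) = 0. Proof. gcomp; lra. Qed.
Lemma gd_0_3 : gform eps6 (dd 0) (dd 3) = 0. Proof. gcomp; lra. Qed.
Lemma gd_0_4 : gform eps6 (dd 0) (dd 4) = 0. Proof. gcomp; lra. Qed.
Lemma gd_0_5 : gform eps6 (dd 0) (dd 5) = 0. Proof. gcomp; lra. Qed.
Lemma gd_1_0 : gform eps6 (dd 1) (dd 0) = 0. Proof. gcomp; lra. Qed.
Lemma gd_1_1 : gform eps6 (dd 1) (dd 1) = 1. Proof. gcomp; lra. Qed.
Lemma gd_1_2 : gform eps6 (dd 1) (dd 2) = 0. Proof. gcomp; lra. Qed.
Lemma gd_1_3 : gform eps6 (dd 1) (dd 3) = 0. Proof. gcomp; lra. Qed.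
Lemma gd_1_4 : gform eps6 (dd 1) (dd 4) = 0. Proof. gcomp; lra. Qed.
Lemma gd_1_5 : gform eps6 (dd 1) (dd 5) = 0. Proof. gcomp; lra. Qed.
Lemma gd_2_0 : gform eps6 (dd 2) (dd 0) = 0. Proof. gcomp; lra. Qed.
Lemma gd_2_1 : gform eps6 (dd 2) (dd 1) = 0. Proof. gcomp; lra. Qed.
Lemma gd_2_2 : gform eps6 (dd 2) (dd 2) = 1. Proof. gcomp; lra. Qed.
Lemma gd_2_3 : gform eps6 (dd 2) (dd 3) = 0. Proof. gcomp; lra. Qed.
Lemma gd_2_4 : gform eps6 (dd 2) (dd 4) = 0. Proof. gcomp; lra. Qed.
Lemma gd_2_5 : gform eps6 (dd 2) (dd 5) = 0. Proof. gcomp; lra. Qed.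
Lemma gd_3_0 : gform eps6 (dd 3) (dd 0) = 0. Proof. gcomp; lra. Qed.
Lemma gd_3_1 : gform eps6 (dd 3) (dd 1) = 0. Proof. gcomp; lra. Qed.
Lemma gd_3_2 : gform eps6 (dd 3) (dd 2) = 0. Proof. gcomp; lra. Qed.
Lemma gd_3_3 : gform eps6 (dd 3) (dd 3) = -1. Proof. gcomp; lra. Qed.
Lemma gd_3_4 : gform eps6 (dd 3) (dd 4) = 0. Proof. gcomp; lra. Qed.
Lemma gd_3_5 : gform eps6 (dd 3) (dd 5) = 0. Proof. gcomp; lra. Qed.
Lemma gd_4_0 : gform eps6 (dd 4) (dd 0) = 0. Proof. gcomp; lra. Qed.
Lemma gd_4_1 : gform eps6 (dd 4) (dd 1) = 0. Proof. gcomp; lra. Qed.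
Lemma gd_4_2 : gform eps6 (dd 4) (dd 2) = 0. Proof. gcomp; lra. Qed.
Lemma gd_4_3 : gform eps6 (dd 4) (dd 3) = 0. Proof. gcomp; lra. Qed.
Lemma gd_4_4 : gform eps6 (dd 4) (dd 4) = -1. Proof. gcomp; lra. Qed.
Lemma gd_4_5 : gform eps6 (dd 4) (dd 5) = 0. Proof. gcomp; lra. Qed.
Lemma gd_5_0 : gform eps6 (dd 5) (dd 0) = 0. Proof. gcomp; lra. Qed.
Lemma gd_5_1 : gform eps6 (dd 5) (dd 1) = 0. Proof. gcomp; lra. Qed.
Lemma gd_5_2 : gform eps6 (dd 5) (dd 2) = 0. Proof. gcomp; lra. Qed.
Lemma gd_5_3 : gform eps6 (dd 5) (dd 3) = 0. Proof. gcomp; lra. Qed.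
Lemma gd_5_4 : gform eps6 (dd 5) (dd 4) = 0. Proof. gcomp; lra. Qed.
Lemma gd_5_5 : gform eps6 (dd 5) (dd 5) = -1. Proof. gcomp; lra. Qed.

Definition J1 := @Jab R 6 eps6 e3 e1.
Definition K := @Jab R 6 eps6 e1 e2.

Lemma g0r (x : 'rV[R]_6) : gform eps6 x 0 = 0.
Proof. by rewrite -(scale0r 0) gZr mul0r. Qed.

Theorem main3 :
  exists (n m : nat) (eps : 'I_n -> R) (J : 'I_m -> 'M[R]_n) (c : 'I_m -> R)
         (mu0 : R) (mu : 'I_m -> R),
    sign_vec eps /\
    (forall i, skew_adjoint eps (J i)) /\
    (forall i j : 'I_m,
        J i *m J j + J j *m J i = (2 * c i * (i == j)%:R)%:M) /\
    ~ jacobi_dual eps (quasiClifford_curv eps mu0 mu J).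
Proof.
exists 6%N, 2%N, eps6, (fun i : 'I_2 => if i == ord0 then J1 else J1 + K),
  (fun _ => 0), 0, (fun i : 'I_2 => if i == ord0 then 1 else -1).
split; [|split; [|split]].
- by move=> i; rewrite /eps6; case: ifP => _; [left|right].
- move=> i; case: ifP => _; [exact: Jab_skew | apply: skewD; exact: Jab_skew].
- have h11 : J1 *m J1 = 0 by apply: JabM; rewrite ?g11 ?g12 ?g13 ?g21 ?g22 ?g23 ?g31 ?g32 ?g33.
  have h1K : J1 *m K = 0 by apply: JabM; rewrite ?g11 ?g12 ?g13 ?g21 ?g22 ?g23 ?g31 ?g32 ?g33.
  have hK1 : K *m J1 = 0 by apply: JabM; rewrite ?g11 ?g12 ?g13 ?g21 ?g22 ?g23 ?g31 ?g32 ?g33.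
  have hKK : K *m K = 0 by apply: JabM; rewrite ?g11 ?g12 ?g13 ?g21 ?g22 ?g23 ?g31 ?g32 ?g33.
  move=> i j; rewrite mulr0 mul0r.
  have -> : (0 : R)%:M = 0 :> 'M[R]_6 by apply/matrixP => a b; rewrite !mxE mul0rn.
  move: h11 h1K hK1 hKK; move: J1 K => A B h11 h1K hK1 hKK; case: (i == ord0); case: (j == ord0);
    by rewrite ?mulmxDl ?mulmxDr ?(h11, h1K, hK1, hKK) ?addr0.
- move=> H.
  have hX : gform eps6 Xv Xv != 0.
    by rewrite /Xv /dd g_delta /eps6 inordK //= oner_neq0.
  have XK : Xv *m K = 0 by rewrite /K Jab_act gX1 gX2 !scale0r subr0.
  have Kskew : skew_adjoint eps6 K := @Jab_skew R 6 eps6 e1 e2.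
  have J1skew : skew_adjoint eps6 J1 := @Jab_skew R 6 eps6 e3 e1.
  have hev : is_eigenvector (jacobi_op eps6
      (quasiClifford_curv eps6 0 (fun i : 'I_2 => if i == ord0 then 1 else -1)
         (fun i : 'I_2 => if i == ord0 then J1 else J1 + K)) Xv) Yv.
    split.
      apply/negP => /eqP/rowP/(_ ord0); rewrite /Yv /dd !mxE /= !eqvalE /= ?inordK //=.
      move/eqP; rewrite subr0 oner_eq0 //.
    exists 0; apply/rowP => j; rewrite jac_entry scale0r [RHS]mxE.
    rewrite /quasiClifford_curv mul0r add0r big_ord_recr big_ord1 /=.
    move: XK Kskew J1skew; move: J1 K => A B XK Ks Js.
    rewrite /RJ !mulmxDr XK addr0 !gDl.
    rewrite (Ks Yv Xv) XK g0r oppr0 (@g_self_skew R 6 eps6 A Xv Js).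
    ring.
  have [_ [lam hl]] := H Xv Yv hX hev.
  have := congr1 (fun v : 'rV[R]_6 => v 0 (inord 1 : 'I_6)) hl.
  rewrite /= jac_entry [RHS]mxE.
  rewrite (_ : Xv 0 (inord 1) = 0); last by rewrite /Xv /dd !mxE !eqvalE /= ?inordK.
  rewrite mulr0 /quasiClifford_curv mul0r add0r big_ord_recr big_ord1 /=.
  have DJ : forall x : 'rV[R]_6, x *m (J1 + K) = x *m J1 + x *m K.
    by move=> x; rewrite mulmxDr.
  rewrite /RJ !DJ /J1 /K !Jab_act.
  rewrite /Xv /Yv /e1 /e2 /e3 !(gBl, gDl, gZl, gNl, gBr, gDr, gZr, gNr).
  rewrite ?(gd_0_0, gd_0_1, gd_0_2, gd_0_3, gd_0_4, gd_0_5, gd_1_0, gd_1_1, gd_1_2, gd_1_3, gd_1_4, gd_1_5, gd_2_0, gd_2_1, gd_2_2, gd_2_3, gd_2_4, gd_2_5, gd_3_0, gd_3_1, gd_3_2, gd_3_3, gd_3_4, gd_3_5, gd_4_0, gd_4_1, gd_4_2, gd_4_3, gd_4_4, gd_4_5, gd_5_0, gd_5_1, gd_5_2, gd_5_3, gd_5_4, gd_5_5).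
  rewrite /eps6 inordK //=.
  lra.
Qed.
End T.

Theorem mainTheorem3 (R : realType) :
  exists (n m : nat) (eps : 'I_n -> R) (J : 'I_m -> 'M[R]_n) (c : 'I_m -> R)
         (mu0 : R) (mu : 'I_m -> R),
    sign_vec eps /\
    (forall i, skew_adjoint eps (J i)) /\
    (forall i j : 'I_m,
        J i *m J j + J j *m J i = (2 * c i * (i == j)%:R)%:M) /\
    ~ jacobi_dual eps (quasiClifford_curv eps mu0 mu J).
Proof. exact: (main3 R).
Qed.
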